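(* Let $(Y,\lambda)\in\{-1,1\}\times\{-1,1\}^m$ follow the Ising model $$P(Y,\lambda)=\frac1Z\exp\Big(\theta_Y Y+\sum_k\theta_k\lambda_kY+\sum_{(k,l)\in E_\lambda}\theta_{kl}\lambda_k\lambda_l\Big),$$ where $E_\lambda$ is a set of unordered pairs of distinct sources, each source in at most one pair. Let $(i,j)\in E_\lambda$. Then $$\varepsilon_{ij}:=\mathbb E[\lambda_i\lambda_j]-\mathbb E[\lambda_iY]\mathbb E[\lambda_jY]=\Delta_{ij}-\Delta_ia_j'-\Delta_ja_i'-\Delta_i\Delta_j,$$ where $$z_{ij}=\sum_{s_i,s_j\in\{\pm1\}}\exp(s_i\theta_i+s_j\theta_j+s_is_j\theta_{ij}),\qquad z'_{ij}=\sum_{s_i,s_j\in\{\pm1\}}\exp(s_i\theta_i+s_j\theta_j),$$ $$\Delta_i=\frac{2}{z_{ij}z'_{ij}}(e^{\theta_{ij}}-e^{-\theta_{ij}})(e^{2\theta_j}-e^{-2\theta_j}),\qquad \Delta_j=\frac{2}{z_{ij}z'_{ij}}(e^{\theta_{ij}}-e^{-\theta_{ij}})(e^{2\theta_i}-e^{-2\theta_i}),$$ $$\Delta_{ij}=\frac{2}{z_{ij}z'_{ij}}(e^{\theta_{ij}}-e^{-\theta_{ij}})(e^{2\theta_i}+e^{-2\theta_i}+e^{2\theta_j}+e^{-2\theta_j}),$$ $$a_i'=\frac{2}{z'_{ij}}e^{\theta_i}(e^{\theta_j}+e^{-\theta_j})-1,\qquad a_j'=\frac{2}{z'_{ij}}e^{\theta_j}(e^{\theta_i}+e^{-\theta_i})-1.$$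 Moreover, $\varepsilon_{ij}\in(0,1)$ if $\theta_i,\theta_j,\theta_{ij}>0$.
   Context: $Z$ is the normalizing constant. *)

(* Defs.v *)
From mathcomp Require Import all_boot all_order all_algebra.
From mathcomp Require Import all_classical all_reals all_analysis.
Set Implicit Arguments. Unset Strict Implicit. Unset Printing Implicit Defensive.
Import Order.TTheory GRing.Theory Num.Theory.
Local Open Scope ring_scope.

Definition spin {R : pzRingType} (b : bool) : R := if b then 1 else -1.

(* a configuration: (Y, lambda) with lambda : 'I_m -> {-1,1} *)
Definition config (m : nat) := (bool * {ffun 'I_m -> bool})%type.

Definition valid_pairs (m : nat) (E : {set {set 'I_m}}) : Prop :=
  (forall e, e \in E -> #|e| = 2%N) /\ finset.trivIset E.

Definition ising_energy {R : realType} (m : nat) (E : {set {set 'I_m}})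
  (thY : R) (th : 'I_m -> R) (thE : {set 'I_m} -> R) (c : config m) : R :=
  thY * spin c.1 + \sum_(k < m) th k * spin (c.2 k) * spin c.1
  + \sum_(e in E) thE e * \prod_(k in e) spin (c.2 k).

Definition ising_Z {R : realType} m E thY th thE : R :=
  \sum_(c : config m) expR (@ising_energy R m E thY th thE c).

Definition ising_P {R : realType} m E thY th thE (c : config m) : R :=
  expR (@ising_energy R m E thY th thE c) / ising_Z E thY th thE.

Definition ising_E {R : realType} m E thY th thE (f : config m -> R) : R :=
  \sum_(c : config m) ising_P E thY th thE c * f c.

Section Quantities.
Variables (R : realType) (ti tj tij : R).
Definition z_ij : R :=
  \sum_(si : bool) \sum_(sj : bool)
     expR (spin si * ti + spin sj * tj + spin si * spin sj * tij).
Definition z'_ij : R :=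
  \sum_(si : bool) \sum_(sj : bool) expR (spin si * ti + spin sj * tj).
Definition Delta_i : R :=
  2 / (z_ij * z'_ij) * (expR tij - expR (- tij)) * (expR (2 * tj) - expR (- (2 * tj))).
Definition Delta_j : R :=
  2 / (z_ij * z'_ij) * (expR tij - expR (- tij)) * (expR (2 * ti) - expR (- (2 * ti))).
Definition Delta_ij : R :=
  2 / (z_ij * z'_ij) * (expR tij - expR (- tij))
   * (expR (2 * ti) + expR (- (2 * ti)) + expR (2 * tj) + expR (- (2 * tj))).
Definition a'_i : R := 2 / z'_ij * expR ti * (expR tj + expR (- tj)) - 1.
Definition a'_j : R := 2 / z'_ij * expR tj * (expR ti + expR (- ti)) - 1.
End Quantities.

(* Main.v *)
Require Import Defs.
From mathcomp Require Import all_boot all_order all_algebra.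
From mathcomp Require Import all_classical all_reals all_analysis.
From mathcomp Require Import ring lra.
Import Order.TTheory GRing.Theory Num.Theory.
Local Open Scope ring_scope.
Set Implicit Arguments. Unset Strict Implicit. Unset Printing Implicit Defensive.

Definition tog (m : nat) (i j : 'I_m) (a b : bool) (c : config m) : config m :=
  (c.1, [ffun k => if k == i then c.2 k (+) a else if k == j then c.2 k (+) b else c.2 k]).

Lemma tog_invol m (i j : 'I_m) a b : involutive (tog i j a b).
Proof.
move=> [y l]; rewrite /tog /=; congr (_, _); apply/ffunP => k; rewrite !ffunE.
case: eqP => _; first by rewrite addbK.
by case: eqP => _ //; rewrite addbK.
Qed.

Lemma tog_i m (i j : 'I_m) a b c : (tog i j a b c).2 i = c.2 i (+) a.
Proof. by rewrite ffunE eqxx. Qed.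

Lemma tog_j m (i j : 'I_m) a b c : i != j -> (tog i j a b c).2 j = c.2 j (+) b.
Proof. by move=> ij; rewrite ffunE eq_sym (negPf ij) eqxx. Qed.

Lemma tog_k m (i j : 'I_m) a b c k : k != i -> k != j -> (tog i j a b c).2 k = c.2 k.
Proof. by move=> ki kj; rewrite ffunE (negPf ki) (negPf kj). Qed.

Lemma sum_tog (R : realType) m (i j : 'I_m) (F : config m -> R) : i != j ->
  \sum_(c : config m) F c = \sum_(c : config m | (c.2 i == false) && (c.2 j == false))
                  \sum_(a : bool) \sum_(b : bool) F (tog i j a b c).
Proof.
move=> ij.
transitivity (\sum_(c : config m) \sum_(a : bool) \sum_(b : bool)
   (if (c.2 i == a) && (c.2 j == b) then F c else 0)).
  apply: eq_bigr => c _; rewrite !big_bool /=.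
  by case: (c.2 i); case: (c.2 j); rewrite /= ?addr0 ?add0r.
rewrite exchange_big /=.
under eq_bigr do rewrite exchange_big /=.
rewrite [RHS]exchange_big /=; apply: eq_bigr => a _.
rewrite [RHS]exchange_big /=; apply: eq_bigr => b _.
rewrite -big_mkcond /= (reindex_inj (inv_inj (tog_invol i j a b))) /=.
apply: eq_bigl => c; rewrite tog_i tog_j //.
by case: (c.2 i); case: (c.2 j); case: a; case: b.
Qed.
Lemma inv_lt_self (R : realType) (x : R) : 1 < x -> x^-1 < x.
Proof.
move=> h; have x0 : 0 < x by apply: lt_trans h.
by apply: (lt_trans _ h); rewrite invf_lt1.
Qed.

Ltac pos := repeat (first [ rewrite subr_gt0 | rewrite invr_gt0 | apply: addr_gt0 | apply: mulr_gt0 | exact: ltr01 | assumption]).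

Lemma alg_main (R : realType) (x y w : R) : 0 < x -> 0 < y -> 0 < w ->
  let p11 := x * y * w in let p10 := x * y^-1 * w^-1 in
  let p01 := x^-1 * y * w^-1 in let p00 := x^-1 * y^-1 * w in
  let z := p11 + p10 + p01 + p00 in
  let zp := x * y + x * y^-1 + x^-1 * y + x^-1 * y^-1 in
  let Di := 2 / (z * zp) * (w - w^-1) * (y * y - y^-1 * y^-1) in
  let Dj := 2 / (z * zp) * (w - w^-1) * (x * x - x^-1 * x^-1) in
  let Dij := 2 / (z * zp) * (w - w^-1) * (x * x + x^-1 * x^-1 + y * y + y^-1 * y^-1) in
  let ai := 2 / zp * x * (y + y^-1) - 1 in
  let aj := 2 / zp * y * (x + x^-1) - 1 in
  let eps := (p11 - p10 - p01 + p00) / z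
     - ((p11 + p10 - p01 - p00) / z) * ((p11 - p10 + p01 - p00) / z) in
  eps = Dij - Di * aj - Dj * ai - Di * Dj
  /\ (1 < x -> 1 < y -> 1 < w -> 0 < eps < 1).
Proof.
move=> x0 y0 w0 p11 p10 p01 p00 z zp Di Dj Dij ai aj eps.
have p11g : 0 < p11 by rewrite /p11 !mulr_gt0 ?invr_gt0.
have p10g : 0 < p10 by rewrite /p10 !mulr_gt0 ?invr_gt0.
have p01g : 0 < p01 by rewrite /p01 !mulr_gt0 ?invr_gt0.
have p00g : 0 < p00 by rewrite /p00 !mulr_gt0 ?invr_gt0.
have zg : 0 < z by rewrite /z !addr_gt0.
have zpg : 0 < zp by rewrite /zp !addr_gt0 // !mulr_gt0 ?invr_gt0.
have xn : x != 0 by rewrite gt_eqF.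
have yn : y != 0 by rewrite gt_eqF.
have wn : w != 0 by rewrite gt_eqF.
have zn : z != 0 by rewrite gt_eqF.
have zpn : zp != 0 by rewrite gt_eqF.
split.
  rewrite /eps /Dij /Di /Dj /ai /aj.
  apply: (mulfI zn); apply: (mulfI zn); apply: (mulfI zpn); apply: (mulfI zpn).
  rewrite /z /zp /p11 /p10 /p01 /p00 in zn zpn *.
  field; rewrite ?xn ?yn ?wn /=.
  by apply/andP; split; apply: lt0r_neq0; pos.
move=> x1 y1 w1.
have xi := inv_lt_self x1; have yi := inv_lt_self y1; have wi := inv_lt_self w1.
have Ci : p11 + p10 - p01 - p00 = (x - x^-1) * (y * w + y^-1 * w^-1)
    + x^-1 * (y - y^-1) * (w - w^-1).
  by rewrite /p11 /p10 /p01 /p00; field; rewrite ?xn ?yn ?wn.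
have Cj : p11 - p10 + p01 - p00 = (y - y^-1) * (x * w + x^-1 * w^-1)
    + y^-1 * (x - x^-1) * (w - w^-1).
  by rewrite /p11 /p10 /p01 /p00; field; rewrite ?xn ?yn ?wn.
have Cig : 0 < p11 + p10 - p01 - p00.
  by rewrite Ci; pos.
have Cjg : 0 < p11 - p10 + p01 - p00.
  by rewrite Cj; pos.
apply/andP; split.
  have -> : eps = 4 * ((w - w^-1) * (w + w^-1)) / (z * z).
    rewrite /eps /z /p11 /p10 /p01 /p00 in zn *; field.
    by rewrite xn yn wn /=; apply: lt0r_neq0; pos.
  rewrite divr_gt0 //; pos.
rewrite /eps.
have h1 : 0 < (p11 + p10 - p01 - p00) / z * ((p11 - p10 + p01 - p00) / z).
  by rewrite mulr_gt0 ?divr_gt0.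
have h2 : (p11 - p10 - p01 + p00) / z < 1.
  by rewrite ltr_pdivrMr // mul1r /z; lra.
lra.
Qed.

Definition rest (R : realType) m (E : {set {set 'I_m}}) (thY : R) (th : 'I_m -> R)
  (thE : {set 'I_m} -> R) (i j : 'I_m) (c : config m) : R :=
  thY * spin c.1 + \sum_(k < m | (k != i) && (k != j)) th k * spin (c.2 k) * spin c.1
  + \sum_(e in E | e != [set i; j]) thE e * \prod_(k in e) spin (c.2 k).

Lemma energy_split (R : realType) m (E : {set {set 'I_m}}) (thY : R) th thE (i j : 'I_m) c :
  i != j -> [set i; j] \in E ->
  ising_energy E thY th thE c = rest E thY th thE i j c
   + spin c.1 * (th i * spin (c.2 i) + th j * spin (c.2 j))
   + thE [set i; j] * (spin (c.2 i) * spin (c.2 j)).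
Proof.
move=> ij hE; rewrite /ising_energy /rest (bigD1 i) //=.
rewrite (bigD1 j) /=; last by rewrite eq_sym.
rewrite (bigD1 [set i; j]) //=.
rewrite big_setU1 ?big_set1 /=; last by rewrite inE.
move: (\sum_(_ < m | _) _) (\sum_(_ in E | _) _) => S1 S2.
move: (spin c.1) (spin (c.2 i)) (spin (c.2 j)) => y si sj.
ring.
Qed.

Lemma rest_tog (R : realType) m (E : {set {set 'I_m}}) (thY : R) th thE (i j : 'I_m) a b c :
  valid_pairs E -> i != j -> [set i; j] \in E ->
  rest E thY th thE i j (tog i j a b c) = rest E thY th thE i j c.
Proof.
move=> [_ /finset.trivIsetP tE] ij hE; rewrite /rest /=.
congr (_ + _ + _).
  apply: eq_bigr => k /andP [ki kj]; by rewrite tog_k.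
apply: eq_bigr => e /andP [eE ne]; congr (_ * _); apply: eq_bigr => k ke.
have dis := tE _ _ eE hE ne.
have ki : k != i by apply: contraTneq ke => ->; rewrite (disjointFl dis) // !inE eqxx.
have kj : k != j by apply: contraTneq ke => ->; rewrite (disjointFl dis) // !inE eqxx orbT.
by rewrite tog_k.
Qed.

Lemma spinN (R : realType) (s : bool) : spin (~~ s) = - spin s :> R.
Proof. by case: s; rewrite /spin /= ?opprK. Qed.

Definition Hs (R : realType) (ti tj tij : R) (G : bool -> bool -> bool -> R) (y : bool) :=
  \sum_(a : bool) \sum_(b : bool)
    expR (spin y * (ti * spin a + tj * spin b) + tij * (spin a * spin b)) * G y a b.

Lemma sum_split (R : realType) m (E : {set {set 'I_m}}) (thY : R) th thE (i j : 'I_m)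
  (G : bool -> bool -> bool -> R) :
  valid_pairs E -> [set i; j] \in E ->
  \sum_(c : config m) expR (ising_energy E thY th thE c) * G c.1 (c.2 i) (c.2 j)
  = \sum_(c : config m | (c.2 i == false) && (c.2 j == false))
      expR (rest E thY th thE i j c) * Hs (th i) (th j) (thE [set i; j]) G c.1.
Proof.
move=> vE hE.
have ij : i != j.
  by case: vE => /(_ _ hE); rewrite cards2; case: (i != j).
rewrite (sum_tog _ ij); apply: eq_bigr => c /andP [/eqP ci /eqP cj].
rewrite /Hs big_distrr; apply: eq_bigr => a _; rewrite big_distrr; apply: eq_bigr => b _.
rewrite (energy_split _ _ _ _ ij hE) rest_tog // tog_i tog_j // ci cj /=.
move: (rest _ _ _ _ _ _ _) => r; by rewrite -addrA expRD mulrA.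
Qed.

Lemma Hs_sub (R : realType) (ti tj tij : R) G y :
  Hs ti tj tij G y = \sum_(s : bool) \sum_(t : bool)
    expR (spin s * ti + spin t * tj + spin s * spin t * tij) * G y (s == y) (t == y).
Proof.
rewrite /Hs; case: y.
  apply: eq_bigr => s _; apply: eq_bigr => t _; rewrite !eqb_id /spin /=.
  congr (expR _ * _); ring.
rewrite (reindex_inj negb_inj); apply: eq_bigr => s _.
rewrite (reindex_inj negb_inj); apply: eq_bigr => t _.
rewrite !spinN /= !eqbF_neg; congr (expR _ * _); ring.
Qed.

Lemma Ex_pair (R : realType) m (E : {set {set 'I_m}}) (thY : R) th thE (i j : 'I_m)
  (G : bool -> bool -> bool -> R) (g : bool -> bool -> R) :
  valid_pairs E -> [set i; j] \in E ->
  (forall y s t, G y (s == y) (t == y) = g s t) ->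
  ising_E E thY th thE (fun c => G c.1 (c.2 i) (c.2 j)) =
  (\sum_(s : bool) \sum_(t : bool)
    expR (spin s * th i + spin t * th j + spin s * spin t * thE [set i; j]) * g s t)
   / z_ij (th i) (th j) (thE [set i; j]).
Proof.
move=> vE hE hG.
set K := \sum_(c : config m | (c.2 i == false) && (c.2 j == false)) expR (rest E thY th thE i j c).
have Kpos : 0 < K.
  rewrite /K (bigD1 (true, [ffun => false])) /=; last by rewrite !ffunE.
  apply: (lt_le_trans (expR_gt0 (rest E thY th thE i j (true, [ffun=> false])))).
  rewrite lerDl.
  by apply: sumr_ge0 => c _; apply/ltW/expR_gt0.
have HsC : forall G' g', (forall y s t, G' y (s == y) (t == y) = g' s t) ->
   \sum_(c : config m) expR (ising_energy E thY th thE c) * G' c.1 (c.2 i) (c.2 j) =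
   K * \sum_(s : bool) \sum_(t : bool)
    expR (spin s * th i + spin t * th j + spin s * spin t * thE [set i; j]) * g' s t.
  move=> G' g' hG'; rewrite sum_split // /K mulr_suml; apply: eq_bigr => c _.
  congr (_ * _); rewrite Hs_sub; apply: eq_bigr => s _; apply: eq_bigr => t _.
  by rewrite hG'.
have Zc : ising_Z E thY th thE = K * z_ij (th i) (th j) (thE [set i; j]).
  rewrite /ising_Z.
  have /= H1 := HsC (fun _ _ _ => 1) (fun _ _ => 1) (fun _ _ _ => erefl).
  transitivity (\sum_(c : config m) expR (ising_energy E thY th thE c) * 1).
    by apply: eq_bigr => c _; rewrite mulr1.
  rewrite H1 /z_ij.
  by congr (_ * _); apply: eq_bigr => s _; apply: eq_bigr => t _; rewrite mulr1.
rewrite /ising_E.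
transitivity ((\sum_(c : config m) expR (ising_energy E thY th thE c) * G c.1 (c.2 i) (c.2 j))
   / ising_Z E thY th thE).
  by rewrite mulr_suml; apply: eq_bigr => c _; rewrite /ising_P mulrAC.
rewrite (HsC _ g) // Zc invfM mulrACA mulfV ?mul1r //; exact: lt0r_neq0.
Qed.

Lemma expR2 (R : realType) (t : R) : expR (2 * t) = expR t * expR t.
Proof. by rewrite mulr_natl mulr2n expRD. Qed.

Ltac nexp := rewrite ?big_bool /spin /=;
  rewrite ?expR2 ?(mul1r, mulr1, mulN1r, mulrN1, mulrNN, opprK, mulNr, mulrN, opprD, expRD, expRN);
  field; rewrite ?expR_eq0 //=.

Theorem lemma5 (R : realType) (m : nat) (E : {set {set 'I_m}})
  (thY : R) (th : 'I_m -> R) (thE : {set 'I_m} -> R) (i j : 'I_m) :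
  valid_pairs E -> [set i; j] \in E ->
  let Ex := ising_E E thY th thE in
  let eps := Ex (fun c => spin (c.2 i) * spin (c.2 j))
             - Ex (fun c => spin (c.2 i) * spin c.1)
               * Ex (fun c => spin (c.2 j) * spin c.1) in
  let ti := th i in let tj := th j in let tij := thE [set i; j] in
  eps = Delta_ij ti tj tij - Delta_i ti tj tij * a'_j ti tj
        - Delta_j ti tj tij * a'_i ti tj - Delta_i ti tj tij * Delta_j ti tj tij
  /\ (0 < ti -> 0 < tj -> 0 < tij -> 0 < eps < 1).
Proof.
move=> vE hE Ex eps ti tj tij.
have E1 : Ex (fun c => spin (c.2 i) * spin (c.2 j)) =
  (\sum_(s : bool) \sum_(t : bool)
    expR (spin s * ti + spin t * tj + spin s * spin t * tij) * (spin s * spin t)) / z_ij ti tj tij.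
  apply: (@Ex_pair _ _ _ thY th thE i j (fun y a b => spin a * spin b) (fun s t => spin s * spin t) vE hE) => y s t.
  by case: y; case: s; case: t; rewrite /spin /=; ring.
have E2 : Ex (fun c => spin (c.2 i) * spin c.1) =
  (\sum_(s : bool) \sum_(t : bool)
    expR (spin s * ti + spin t * tj + spin s * spin t * tij) * spin s) / z_ij ti tj tij.
  apply: (@Ex_pair _ _ _ thY th thE i j (fun y a b => spin a * spin y) (fun s t => spin s) vE hE) => y s t.
  by case: y; case: s; case: t; rewrite /spin /=; ring.
have E3 : Ex (fun c => spin (c.2 j) * spin c.1) =
  (\sum_(s : bool) \sum_(t : bool)
    expR (spin s * ti + spin t * tj + spin s * spin t * tij) * spin t) / z_ij ti tj tij.
  apply: (@Ex_pair _ _ _ thY th thE i j (fun y a b => spin b * spin y) (fun s t => spin t) vE hE) => y s t.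
  by case: y; case: s; case: t; rewrite /spin /=; ring.
rewrite /eps E1 E2 E3.
set x := expR ti. set y := expR tj. set w := expR tij.
have hz : z_ij ti tj tij = x * y * w + x * y^-1 * w^-1 + x^-1 * y * w^-1 + x^-1 * y^-1 * w.
  rewrite /z_ij /x /y /w; nexp.
have hzp : z'_ij ti tj = x * y + x * y^-1 + x^-1 * y + x^-1 * y^-1.
  rewrite /z'_ij /x /y; nexp.
have hC1 : \sum_(s : bool) \sum_(t : bool)
    expR (spin s * ti + spin t * tj + spin s * spin t * tij) * (spin s * spin t)
  = x * y * w - x * y^-1 * w^-1 - x^-1 * y * w^-1 + x^-1 * y^-1 * w.
  rewrite /x /y /w; nexp.
have hC2 : \sum_(s : bool) \sum_(t : bool)
    expR (spin s * ti + spin t * tj + spin s * spin t * tij) * spin s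
  = x * y * w + x * y^-1 * w^-1 - x^-1 * y * w^-1 - x^-1 * y^-1 * w.
  rewrite /x /y /w; nexp.
have hC3 : \sum_(s : bool) \sum_(t : bool)
    expR (spin s * ti + spin t * tj + spin s * spin t * tij) * spin t
  = x * y * w - x * y^-1 * w^-1 + x^-1 * y * w^-1 - x^-1 * y^-1 * w.
  rewrite /x /y /w; nexp.
have hDi : Delta_i ti tj tij = 2 / (z_ij ti tj tij * z'_ij ti tj) * (w - w^-1) * (y * y - y^-1 * y^-1).
  by rewrite /Delta_i /x /y /w !expRN !expR2 !invfM.
have hDj : Delta_j ti tj tij = 2 / (z_ij ti tj tij * z'_ij ti tj) * (w - w^-1) * (x * x - x^-1 * x^-1).
  by rewrite /Delta_j /x /y /w !expRN !expR2 !invfM.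
have hDij : Delta_ij ti tj tij = 2 / (z_ij ti tj tij * z'_ij ti tj) * (w - w^-1)
     * (x * x + x^-1 * x^-1 + y * y + y^-1 * y^-1).
  by rewrite /Delta_ij /x /y /w !expRN !expR2 !invfM.
have hai : a'_i ti tj = 2 / z'_ij ti tj * x * (y + y^-1) - 1.
  by rewrite /a'_i /x /y !expRN.
have haj : a'_j ti tj = 2 / z'_ij ti tj * y * (x + x^-1) - 1.
  by rewrite /a'_j /x /y !expRN.
rewrite hDi hDj hDij hai haj hC1 hC2 hC3 hz hzp.
have [A B] := alg_main (expR_gt0 ti) (expR_gt0 tj) (expR_gt0 tij).
split; first exact: A.
by move=> a b c; apply: B; apply: pexpR_gt1.
Qed.
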